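(* Let $k\ge1$. For a coloring matrix $A$, let $\widehat{A}$ (the blowup of $A$) be the block matrix obtained by replacing every entry $1$ of $A$ by the $k\times k$ all-ones matrix and every entry $0$ by the $k\times k$ all-zeros matrix. If $A$ and $B$ are tree coloring equivalent, then so are $\widehat{A}$ and $\widehat{B}$; and if $A$ and $B$ are strictly tree coloring equivalent, then so are $\widehat{A}$ and $\widehat{B}$. Moreover, $t_{\widehat{A}}(n)=k^n t_A(n)$ for all $n\ge1$.
   Context: A plane tree is an unlabeled rooted tree in which the children of every vertex are linearly ordered. A coloring matrix is an $m\times m$ matrix $A=(a_{ij})$ with entries in $\{0,1\}$. An $A$-coloring of a plane tree assigns to each vertex a color in $\{1,\dots,m\}$ such that whenever a vertex of color $j$ is a child of a vertex of color $i$, $a_{ij}=1$. Let $t_A(n)$ be the number of pairs (plane tree with $n$ vertices, $A$-coloring of it) and $t_A^{(i)}(n)$ the number of those with root color $i$. Two coloring matrices $A,B$ of the same size are tree coloring equivalent if $t_A(n)=t_B(n)$ for all $n\ge1$, and strictly tree coloring equivalent if $t_A^{(i)}(n)=t_B^{(i)}(n)$ for all $n\ge1$ and all $i$. *)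

(* Defs.v *)
From Stdlib Require Import List.
From mathcomp Require Import all_boot all_order all_algebra.
Set Implicit Arguments. Unset Strict Implicit. Unset Printing Implicit Defensive.

Inductive ptree : Type := PNode of seq ptree.

Fixpoint nverts (t : ptree) : nat :=
  let: PNode ts := t in (sumn (map nverts ts)).+1.

(* A plane tree together with a coloring of its vertices by colors in 'I_m
   (color 1..m of the paper is 'I_m here). *)
Inductive ctree (m : nat) : Type := CNode of 'I_m & seq (ctree m).

Definition croot (m : nat) (c : ctree m) : 'I_m := let: CNode i _ := c in i.

Fixpoint shape (m : nat) (c : ctree m) : ptree :=
  let: CNode _ cs := c in PNode (map (@shape m) cs).

(* A coloring matrix is an m x m 0/1 matrix, here with boolean entries
   (true = 1).  A coloring is an A-coloring iff every child of a vertex of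
   color i has a color j with a_ij = 1. *)
Fixpoint valid (m : nat) (A : 'M[bool]_m) (c : ctree m) : bool :=
  let: CNode i cs := c in all (fun d => A i (croot d) && valid A d) cs.

Definition ncount (T : Type) (P : T -> Prop) (N : nat) : Prop :=
  exists l : seq T, List.NoDup l /\ (forall x, P x <-> List.In x l) /\ size l = N.

Definition tcount (m : nat) (A : 'M[bool]_m) (n N : nat) : Prop :=
  ncount (fun p : ptree * ctree m =>
            [/\ shape p.2 = p.1, nverts p.1 = n & valid A p.2]) N.

Definition tcount_root (m : nat) (A : 'M[bool]_m) (i : 'I_m) (n N : nat) : Prop :=
  ncount (fun p : ptree * ctree m =>
            [/\ shape p.2 = p.1, nverts p.1 = n, valid A p.2 & croot p.2 = i]) N.

Definition tc_equiv (m : nat) (A B : 'M[bool]_m) : Prop :=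
  forall n, 1 <= n -> forall N, tcount A n N <-> tcount B n N.

Definition strict_tc_equiv (m : nat) (A B : 'M[bool]_m) : Prop :=
  forall n, 1 <= n -> forall (i : 'I_m) N, tcount_root A i n N <-> tcount_root B i n N.

(* Blowup: index x of 'I_(m * k) lies in block x %/ k. *)
Lemma blk_lt (m k : nat) (x : 'I_(m * k)) : x %/ k < m.
Proof.
case: k x => [|k] x; first by case: x => /= x; rewrite muln0.
by rewrite ltn_divLR // (ltn_ord x).
Qed.

Definition blk (m k : nat) (x : 'I_(m * k)) : 'I_m := Ordinal (blk_lt x).

Definition blowup (m k : nat) (A : 'M[bool]_m) : 'M[bool]_(m * k) :=
  \matrix_(x, y) A (blk x) (blk y).

(* Main.v *)
Require Import Defs.
From HB Require Import structures.
From mathcomp Require Import all_boot all_order all_algebra.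
Set Implicit Arguments. Unset Strict Implicit. Unset Printing Implicit Defensive.

Definition ptree_ind2 (P : ptree -> Prop)
  (H : forall ts, foldr (fun t acc => P t /\ acc) True ts -> P (PNode ts)) :
  forall t, P t :=
  fix F t := let: PNode ts := t in H ts
    ((fix G ts := match ts return foldr (fun t acc => P t /\ acc) True ts with
      | [::] => I | t :: ts => conj (F t) (G ts) end) ts).

Definition ctree_ind2 m (P : ctree m -> Prop)
  (H : forall i cs, foldr (fun t acc => P t /\ acc) True cs -> P (CNode i cs)) :
  forall t, P t :=
  fix F t := let: CNode i ts := t in H i ts
    ((fix G ts := match ts return foldr (fun t acc => P t /\ acc) True ts with
      | [::] => I | t :: ts => conj (F t) (G ts) end) ts).

Fixpoint penc (t : ptree) : GenTree.tree nat :=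
  let: PNode ts := t in GenTree.Node 0 (map penc ts).

Lemma penc_inj : injective penc.
Proof.
elim/ptree_ind2 => ts IH [us] /= [] E; congr PNode.
elim: ts us IH E => [|t ts IHt] [|u us] //= [IHa IHb] [/IHa -> /IHt].
by move=> /(_ IHb) ->.
Qed.

HB.instance Definition _ := Equality.copy ptree (inj_type penc_inj).

Fixpoint cenc m (t : ctree m) : GenTree.tree nat :=
  let: CNode i ts := t in GenTree.Node i (map (@cenc m) ts).

Lemma cenc_inj m : injective (@cenc m).
Proof.
elim/ctree_ind2 => i ts IH [j us] /= [/val_inj -> E]; congr CNode.
elim: ts us IH E => [|t ts IHt] [|u us] //= [IHa IHb] [/IHa -> /IHt].
by move=> /(_ IHb) ->.
Qed.

HB.instance Definition _ m := Equality.copy (ctree m) (inj_type (@cenc_inj m)).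

Lemma In_mem (T : eqType) (x : T) (l : seq T) : List.In x l <-> x \in l.
Proof.
elim: l => [|a l IH] //=; rewrite in_cons; split.
- by case=> [->|/IH ->]; rewrite ?eqxx ?orbT.
- by case/orP=> [/eqP ->|/IH]; [left|right].
Qed.

Lemma NoDup_uniq (T : eqType) (l : seq T) : List.NoDup l <-> uniq l.
Proof.
elim: l => [|a l IH] /=; first by split=> // _; constructor.
split.
- move=> H; inversion H; subst; apply/andP; split; last by apply/IH.
  by apply/negP => /In_mem.
- case/andP=> Ha /IH Hl; constructor => // /In_mem; exact/negP.
Qed.

Lemma ncountE (T : eqType) (P : T -> Prop) N :
  ncount P N <-> exists l : seq T, [/\ uniq l, forall x, P x <-> x \in l & size l = N].
Proof.
split=> [[l [/NoDup_uniq U [H S]]]|[l [U H S]]]; exists l.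
- by split=> // x; rewrite H In_mem.
- by split; [apply/NoDup_uniq|split=> // x; rewrite H In_mem].
Qed.

Lemma ncount_uniq (T : eqType) (P : T -> Prop) N N' :
  ncount P N -> ncount P N' -> N = N'.
Proof.
move=> /ncountE[l [U H <-]] /ncountE[l' [U' H' <-]].
apply/perm_size/uniq_perm => // x; apply/idP/idP => [/H/H'|/H'/H] //.
Qed.

Section Fiber.
Variables (X Y : eqType) (P : X -> Prop) (Q : Y -> Prop) (f : Y -> X)
  (L : X -> seq Y) (c : nat).
Hypothesis HQ : forall y, Q y -> P (f y).
Hypothesis HL : forall x, P x ->
  [/\ uniq (L x), size (L x) = c & forall y, y \in L x <-> f y = x /\ Q y].

Lemma fiber_fwd N : ncount P N -> ncount Q (c * N).
Proof.
move=> /ncountE[l [U H S]]; apply/ncountE.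
exists [seq y | x <- l, y <- L x]; split.
- apply: allpairs_uniq_dep => // [x /H /HL[]//|].
  move=> [x y] [x' y'] /allpairsPdep[a [b [/H Pa Lb [-> ->]]]].
  move=> /allpairsPdep[a' [b' [/H Pa' Lb' [-> ->]]]] /= E; subst b'.
  have [_ _ /(_ b) /iffLR /(_ Lb) [Ea _]] := HL Pa.
  have [_ _ /(_ b) /iffLR /(_ Lb') [Ea' _]] := HL Pa'.
  by rewrite -Ea -Ea'.
- move=> y; split.
  + move=> Qy; have Pf := HQ Qy.
    apply/allpairsPdep; exists (f y), y; split => //; first exact/H.
    by have [_ _ /(_ y) ->] := HL Pf.
  + move=> /allpairsPdep[a [b [/H Pa Lb ->]]].
    by have [_ _ /(_ b) /iffLR /(_ Lb) []] := HL Pa.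
- rewrite size_allpairs_dep -S.
  have -> : [seq size (L x) | x <- l] = [seq c | x <- l].
    by apply/eq_in_map => x /H /HL[].
  by elim: l {U H S} => [|a l /= ->]; rewrite ?muln0 ?mulnS.
Qed.

Hypothesis cpos : 0 < c.

Lemma fiber_iff M : ncount Q M <-> exists N, ncount P N /\ M = c * N.
Proof.
split; last by case=> N [/fiber_fwd H ->].
move=> HM; have /ncountE[lq [U H S]] := HM.
have HP : ncount P (size (undup (map f lq))).
  apply/ncountE; exists (undup (map f lq)); split; rewrite ?undup_uniq //.
  move=> x; rewrite mem_undup; split.
  - move=> Px; have [_ Sz Hm] := HL Px.
    case E: (L x) Sz => [|y ys]; first by move=> Z; move: cpos; rewrite -Z.
    have /Hm [fy Qy] : y \in L x by rewrite E mem_head.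
    by move=> _; apply/mapP; exists y => //; apply/H.
  - by case/mapP => y /H /HQ Py ->.
exists (size (undup (map f lq))); split => //.
exact: ncount_uniq HM (fiber_fwd HP).
Qed.
End Fiber.

Fixpoint prodl (T : Type) (ss : seq (seq T)) : seq (seq T) :=
  if ss is s :: ss' then [seq x :: xs | x <- s, xs <- prodl ss'] else [:: [::]].

Lemma mem_prodl (T : eqType) (ss : seq (seq T)) xs :
  (xs \in prodl ss) = all2 (fun x s => x \in s) xs ss.
Proof.
elim: ss xs => [|s ss IH] [|y ys] //=.
- apply/negP => /allpairsP[[a b] [_ _ //]].
- apply/allpairsP/andP => [[[a b] /= [Ha Hb [-> ->]]]|[Hy Hys]].
    by rewrite -IH.
  by exists (y, ys); rewrite /= Hy IH.
Qed.

Lemma uniq_prodl (T : eqType) (ss : seq (seq T)) :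
  all uniq ss -> uniq (prodl ss).
Proof.
elim: ss => [|s ss IH] //= /andP[Us Uss].
apply: allpairs_uniq => //; first exact: IH.
by move=> [a b] [a' b'] _ _ /= [-> ->].
Qed.

Lemma size_prodl (T : Type) (ss : seq (seq T)) :
  size (prodl ss) = foldr (fun s n => size s * n) 1 ss.
Proof. by elim: ss => //= s ss <-; rewrite size_allpairs. Qed.

Section Blow.
Variables (m k : nat).
Hypothesis kpos : 0 < k.

Lemma lift_col_lt (i : 'I_m) (r : 'I_k) : i * k + r < m * k.
Proof.
have := ltn_ord i; have := ltn_ord r => Hr Hi.
apply: (@leq_trans (i * k + k)); first by rewrite ltn_add2l.
by rewrite -mulSnr leq_mul2r Hi orbT.
Qed.

Definition lift_col (i : 'I_m) (r : 'I_k) : 'I_(m * k) := Ordinal (lift_col_lt i r).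

Lemma blk_lift i r : blk (lift_col i r) = i.
Proof.
apply: val_inj => /=; rewrite divnMDl // divn_small ?addn0 //.
Qed.

Lemma blk_liftP (x : 'I_(m * k)) (i : 'I_m) :
  (exists r, x = lift_col i r) <-> blk x = i.
Proof.
split=> [[r ->]|<-]; first exact: blk_lift.
exists (Ordinal (ltn_pmod x kpos)); apply: val_inj => /=.
by rewrite -divn_eq.
Qed.

Fixpoint proj (d : ctree (m * k)) : ctree m :=
  let: CNode x ds := d in CNode (blk x) (map proj ds).

Fixpoint lifts (c : ctree m) : seq (ctree (m * k)) :=
  let: CNode i cs := c in
  [seq CNode (lift_col i r) ds | r <- enum 'I_k, ds <- prodl (map lifts cs)].

Definition liftsr (c : ctree m) (x : 'I_(m * k)) : seq (ctree (m * k)) :=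
  let: CNode i cs := c in [seq CNode x ds | ds <- prodl (map lifts cs)].

Lemma croot_proj d : croot (proj d) = blk (croot d).
Proof. by case: d. Qed.

Lemma shape_proj d : Defs.shape (proj d) = Defs.shape d.
Proof.
elim/ctree_ind2: d => x ds IH /=; congr PNode; rewrite -map_comp.
by elim: ds IH => //= d ds IHd [-> /IHd ->].
Qed.

Lemma valid_proj (A : 'M[bool]_m) d : valid (blowup k A) d = valid A (proj d).
Proof.
elim/ctree_ind2: d => x ds IH /=; rewrite all_map.
elim: ds IH => //= d ds IHd [-> /IHd ->].
by rewrite mxE croot_proj.
Qed.

Lemma lifts_mem_list cs :
  foldr (fun t acc => (forall d, d \in lifts t <-> proj d = t) /\ acc) True cs ->
  forall ds, ds \in prodl (map lifts cs) <-> map proj ds = cs.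
Proof.
move=> IH ds; rewrite mem_prodl.
elim: cs IH ds => [|c cs IHc] /= => [_|[IHa IHb]] [|d ds] //=.
split=> [/andP[/IHa -> /(IHc IHb) ->]|[/IHa -> /(IHc IHb) ->]] //.
Qed.

Lemma foldrP (T : eqType) (P : T -> Prop) cs :
  foldr (fun t acc => P t /\ acc) True cs -> forall t, t \in cs -> P t.
Proof.
elim: cs => //= c cs IH [Pc /IH H] t; rewrite in_cons => /orP[/eqP ->|] //.
exact: H.
Qed.

Lemma lifts_mem_list' cs :
  (forall t, t \in cs -> forall d, d \in lifts t <-> proj d = t) ->
  forall ds, ds \in prodl (map lifts cs) <-> map proj ds = cs.
Proof.
move=> IH ds; rewrite mem_prodl.
elim: cs IH ds => [|c cs IHc] IH [|d ds] //=.
have IHa := IH c (mem_head _ _).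
have IHb : forall t, t \in cs -> forall d, d \in lifts t <-> proj d = t.
  by move=> t Ht; apply: IH; rewrite in_cons Ht orbT.
split=> [/andP[/IHa -> /(IHc IHb) ->]|[/IHa -> /(IHc IHb) ->]] //.
Qed.

Lemma size_prodl_lifts cs :
  (forall t, t \in cs -> size (lifts t) = k ^ nverts (Defs.shape t)) ->
  size (prodl (map lifts cs)) = k ^ sumn (map nverts (map (@Defs.shape _) cs)).
Proof.
rewrite size_prodl; elim: cs => [|c cs IHc] IH //=.
rewrite IH ?mem_head // IHc ?expnD // => t Ht.
by apply: IH; rewrite in_cons Ht orbT.
Qed.

Lemma lifts_spec c :
  [/\ forall d, d \in lifts c <-> proj d = c, uniq (lifts c)
    & size (lifts c) = k ^ nverts (Defs.shape c)].
Proof.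
elim/ctree_ind2: c => i cs /foldrP IH.
have Hm := lifts_mem_list' (fun t Ht => let: And3 a _ _ := IH t Ht in a).
split.
- case=> x ds; split.
  + case/allpairsP => [[r ds'] [_ /= /Hm Hds [-> ->]]].
    by rewrite /= blk_lift Hds.
  + case=> /blk_liftP [r ->] /Hm Hds; apply/allpairsP; exists (r, ds).
    by rewrite mem_enum.
- apply: allpairs_uniq; first exact: enum_uniq.
  + apply: uniq_prodl; rewrite all_map; apply/allP => t /IH [] //.
  + move=> [r ds] [r' ds'] _ _ /= [E ->]; congr pair.
    by apply: val_inj; case: E => /addnI.
- rewrite size_allpairs size_enum_ord size_prodl_lifts; last first.
    by move=> t /IH [].
  by rewrite /= expnS.
Qed.

Lemma liftsr_spec c x : blk x = croot c ->
  [/\ forall d, d \in liftsr c x <-> proj d = c /\ croot d = x, uniq (liftsr c x)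
    & size (liftsr c x) = k ^ (nverts (Defs.shape c)).-1].
Proof.
case: c => i cs /= Hx.
have IH : forall t, t \in cs -> _ := fun t _ => lifts_spec t.
have Hm := lifts_mem_list' (fun t Ht => let: And3 a _ _ := IH t Ht in a).
split.
- case=> y ds; split.
  + by case/mapP => ds' /Hm Hds [-> ->]; rewrite /= Hx Hds.
  + case=> [[Ey /Hm Hds] /= Ex]; subst; apply/mapP; exists ds => //.
- rewrite map_inj_uniq; last by move=> a b [].
  apply: uniq_prodl; rewrite all_map; apply/allP => t /IH [] //.
- rewrite size_map size_prodl_lifts //; by move=> t /IH [].
Qed.
End Blow.

Lemma tcount_blow m k (kpos : 0 < k) (A : 'M[bool]_m) n M :
  tcount (blowup k A) n M <-> exists N, tcount A n N /\ M = k ^ n * N.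
Proof.
rewrite /tcount /tcount_root; apply: (@fiber_iff _ _ _ _ (fun y : ptree * ctree (m * k) => (y.1, proj y.2))
          (fun x => [seq (x.1, d) | d <- lifts k x.2])); last by rewrite expn_gt0 kpos.
- by move=> [t d] /= [<- <- V]; split; rewrite ?shape_proj -?valid_proj.
- move=> [t c] /= [Hs Hn V]; have [Hm U S] := lifts_spec kpos c.
  split.
  + by rewrite map_inj_uniq // => a b [].
  + by rewrite size_map S Hs Hn.
  + move=> [t' d]; split.
    * case/mapP => d' /Hm Hd [-> ->] /=; subst c; split=> //.
      by split=> //; rewrite ?valid_proj // -shape_proj.
    * case=> [[-> Hd]] _; apply/mapP; exists d => //; exact/Hm.
Qed.

Lemma tcount_root_blow m k (kpos : 0 < k) (A : 'M[bool]_m) x n M :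
  tcount_root (blowup k A) x n M <->
  exists N, tcount_root A (blk x) n N /\ M = k ^ n.-1 * N.
Proof.
rewrite /tcount /tcount_root; apply: (@fiber_iff _ _ _ _ (fun y : ptree * ctree (m * k) => (y.1, proj y.2))
          (fun p => [seq (p.1, d) | d <- liftsr p.2 x])); last by rewrite expn_gt0 kpos.
- by move=> [t d] /= [<- <- V <-]; split; rewrite ?shape_proj -?valid_proj ?croot_proj.
- move=> [t c] /= [Hs Hn V Hr]; have [Hm U S] := liftsr_spec kpos (esym Hr).
  split.
  + by rewrite map_inj_uniq // => a b [].
  + by rewrite size_map S Hs Hn.
  + move=> [t' d]; split.
    * case/mapP => d' /Hm [Hd Hx] [-> ->] /=; subst c; split=> //.
      by split=> //; rewrite ?valid_proj // -shape_proj.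
    * case=> [[-> Hd]] [_ _ _ Hx]; apply/mapP; exists d => //; exact/Hm.
Qed.

Theorem theorem22 (m k : nat) (A B : 'M[bool]_m) :
  1 <= k ->
  [/\ (tc_equiv A B -> tc_equiv (blowup k A) (blowup k B)),
      (strict_tc_equiv A B -> strict_tc_equiv (blowup k A) (blowup k B)) &
      (forall n N, 1 <= n -> tcount A n N -> tcount (blowup k A) n (k ^ n * N))].
Proof.
move=> kpos; split.
- move=> H n Hn N; rewrite !tcount_blow //.
  by split=> -[N' [/(H n Hn) HN ->]]; exists N'.
- move=> H n Hn i N; rewrite !tcount_root_blow //.
  by split=> -[N' [/(H n Hn) HN ->]]; exists N'.
- by move=> n N _ HN; apply/tcount_blow => //; exists N.
Qed.
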